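(* Let $q$ be a prime power, let $n$ be an even positive integer, and let $Z$ be a set of $q^n$ matrices over $\mathbb{F}_{q^2}$ of size $n/2\times n/2$ with the property that $A-B$ is nonsingular for all distinct $A,B\in Z$. Let \[ Y=\left\{\begin{pmatrix} I & A^*\\ A & AA^*\end{pmatrix}:A\in Z\right\}\cup\left\{\begin{pmatrix} O & O\\ O & I\end{pmatrix}\right\}, \] where $O$ and $I$ are the zero and identity matrices of size $n/2\times n/2$. Then $Y$ is an $n$-code in $X(n,q)$ of size $q^n+1$.
   Context: For a matrix $A$ over $\mathbb{F}_{q^2}$, $A^*$ denotes the transpose of the matrix obtained by applying $x\mapsto x^q$ to each entry. $X(n,q)$ is the set of $n\times n$ matrices $A$ over $\mathbb{F}_{q^2}$ with $A^*=A$ (Hermitian matrices). A nonempty subset $Y\subseteq X(n,q)$ is a $d$-code if $\operatorname{rank}(A-B)\ge d$ for all distinct $A,B\in Y$. *)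

(* Defs.v *)
From HB Require Import structures.
From mathcomp Require Import all_boot all_order all_algebra.
Set Implicit Arguments. Unset Strict Implicit. Unset Printing Implicit Defensive.
Import GRing.Theory.
Local Open Scope ring_scope.

(* A^* : conjugate transpose w.r.t. the involution x |-> x^q of F_{q^2}. *)
Definition conjT (F : finFieldType) (q : nat) (m n : nat) (A : 'M[F]_(m, n))
  : 'M[F]_(n, m) := (map_mx (fun x => x ^+ q) A)^T.

Definition hermitian (F : finFieldType) (q n : nat) (A : 'M[F]_n) : bool :=
  conjT q A == A.

Definition is_dcode (F : finFieldType) (q n d : nat) (Y : {set 'M[F]_n}) : Prop :=
  [/\ Y != set0,
      (forall A, A \in Y -> hermitian q A) &
      (forall A B, A \in Y -> B \in Y -> A != B -> (d <= \rank (A - B)%R)%N)].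

(* Main.v *)
Require Import Defs.
From HB Require Import structures.
From mathcomp Require Import all_boot all_order all_algebra.
From mathcomp Require Import finfield.
Import GRing.Theory.
Local Open Scope ring_scope.

Section Conj.
Variables (F : finFieldType) (q : nat).
Hypotheses (fD : forall x y : F, (x + y) ^+ q = x ^+ q + y ^+ q)
  (fI : forall x : F, (x ^+ q) ^+ q = x) (q0 : (0 < q)%N).

Lemma f0 : (0 : F) ^+ q = 0.
Proof. by rewrite expr0n gtn_eqF. Qed.

Lemma fN (x : F) : (- x) ^+ q = - x ^+ q.
Proof.
apply/eqP; rewrite -subr_eq0 opprK -fD addNr f0 //.
Qed.

Lemma fM (x y : F) : (x * y) ^+ q = x ^+ q * y ^+ q.
Proof. by rewrite exprMn. Qed.

Lemma fsum (I : Type) (r : seq I) (P : pred I) (g : I -> F) :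
  (\sum_(i <- r | P i) g i) ^+ q = \sum_(i <- r | P i) (g i) ^+ q.
Proof. exact: (big_morph (fun x => x ^+ q) fD f0). Qed.

Lemma conjT_block m1 m2 n1 n2 (a : 'M[F]_(m1, n1)) (b : 'M[F]_(m1, n2))
   (c : 'M[F]_(m2, n1)) (d : 'M[F]_(m2, n2)) :
  conjT q (block_mx a b c d) = block_mx (conjT q a) (conjT q c) (conjT q b) (conjT q d).
Proof. by rewrite /conjT map_block_mx tr_block_mx. Qed.

Lemma conjTK m n (A : 'M[F]_(m, n)) : conjT q (conjT q A) = A.
Proof. by apply/matrixP => i j; rewrite !mxE fI. Qed.

Lemma conjT1 n : conjT q (1%:M : 'M[F]_n) = 1%:M.
Proof.
apply/matrixP => i j; rewrite !mxE eq_sym; case: (i == j); rewrite /= ?expr1n ?f0 //.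

Qed.

Lemma conjT0 m n : conjT q (0 : 'M[F]_(m, n)) = 0.
Proof. by apply/matrixP => i j; rewrite !mxE f0. Qed.

Lemma conjTB m n (A B : 'M[F]_(m, n)) : conjT q (A - B) = conjT q A - conjT q B.
Proof. by apply/matrixP => i j; rewrite !mxE fD fN. Qed.

Lemma conjTM m n p (A : 'M[F]_(m, n)) (B : 'M[F]_(n, p)) :
  conjT q (A *m B) = conjT q B *m conjT q A.
Proof.
apply/matrixP => i j; rewrite !mxE fsum; apply: eq_bigr => l _.
by rewrite !mxE fM mulrC.
Qed.

Lemma conjT_unit n (A : 'M[F]_n) : A \in unitmx -> conjT q A \in unitmx.
Proof.
move=> uA; have : conjT q A *m conjT q (invmx A) = 1%:M.
  by rewrite -conjTM mulVmx // conjT1.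
by case/mulmx1_unit.
Qed.
End Conj.

Lemma unit_blk1 (F : fieldType) m (A : 'M[F]_m) (B : 'M[F]_m) :
  block_mx 1%:M B A (A *m B - 1%:M) \in unitmx.
Proof.
have : block_mx 1%:M B A (A *m B - 1%:M) *m block_mx (1%:M - B *m A) B A (- 1%:M) = 1%:M.
  rewrite mulmx_block (scalar_mx_block m m) !mul1mx !mulmxBr !mulmxBl !mul1mx !mulmx1 mulmxA.
  rewrite !mulmxN !mulmx1; congr block_mx; rewrite ?mulmxA.
  - by rewrite subrK.
  - by rewrite subrr.
  - by rewrite addrA subrK subrr.
  - by rewrite opprK addrA addrN add0r.
by case/mulmx1_unit.
Qed.

Lemma unit_blk2 (F : fieldType) m (X Y W : 'M[F]_m) :
  X \in unitmx -> Y \in unitmx -> block_mx 0 X Y W \in unitmx.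
Proof.
move=> uX uY.
have : block_mx 0 X Y W *m block_mx (- (invmx Y *m W *m invmx X)) (invmx Y) (invmx X) 0 = 1%:M.
  rewrite mulmx_block (scalar_mx_block m m) !mul0mx !mulmx0 !mulmxV // !add0r !addr0.
  by rewrite mulmxN !mulmxA mulmxV // mul1mx addNr.
by case/mulmx1_unit.
Qed.

Theorem theorem4p3 (F : finFieldType) (p k q m : nat)
  (hp : prime p) (hk : (0 < k)%N) (hq : q = (p ^ k)%N)
  (hF : #|F| = (q ^ 2)%N) (hm : (0 < m)%N)
  (Z : {set 'M[F]_m})
  (hZ : #|Z| = (q ^ (m + m))%N)
  (hdist : forall A B, A \in Z -> B \in Z -> A != B -> A - B \in unitmx) :
  let Y : {set 'M[F]_(m + m)} :=
    [set block_mx 1%:M (conjT q A) A (A *m conjT q A) | A in Z]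
      :|: [set block_mx 0 0 0 1%:M] in
  is_dcode q (m + m) Y /\ #|Y| = (q ^ (m + m) + 1)%N.
Proof.
move=> Y.
have pch : p \in [pchar F].
  by apply: (@card_finPcharP _ p (k * 2)) => //; rewrite hF hq expnM.
have q0 : (0 < q)%N by rewrite hq expn_gt0 prime_gt0.
have fD : forall x y : F, (x + y) ^+ q = x ^+ q + y ^+ q.
  by move=> x y; rewrite hq exprDn_pchar // pnatX pnatE // pch.
have fI : forall x : F, (x ^+ q) ^+ q = x.
  by move=> x; rewrite -exprM -[(q * q)%N]/(q ^ 2)%N -hF expf_card.
have cK := @conjTK F q fI.
have c1 := @conjT1 F q q0.
have c0 := @conjT0 F q q0.
have cM := @conjTM F q fD q0.
have cB := @conjTB F q fD q0.
have cblk := @conjT_block F q.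
pose M (A : 'M[F]_m) := block_mx 1%:M (conjT q A) A (A *m conjT q A).
pose E : 'M[F]_(m + m) := block_mx 0 0 0 1%:M.
have injM : injective M by move=> A B /eq_block_mx [_ _ -> _].
have notE : forall A, M A != E.
  move=> A; apply/eqP => /eq_block_mx [h _ _ _].
  have := congr1 (fun X : 'M[F]_m => X (Ordinal hm) (Ordinal hm)) h.
  by rewrite !mxE eqxx /= => /eqP; rewrite oner_eq0.
have rME : forall A, \rank (M A - E) = (m + m)%N.
  move=> A; apply: mxrank_unit.
  rewrite /M /E opp_block_mx add_block_mx !oppr0 !addr0.
  exact: unit_blk1.
have rMM : forall A B, A \in Z -> B \in Z -> A != B -> \rank (M A - M B) = (m + m)%N.
  move=> A B hA hB nAB; apply: mxrank_unit.
  rewrite /M opp_block_mx add_block_mx subrr -cB.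
  apply: unit_blk2; last exact: hdist.
  by apply: conjT_unit => //; exact: hdist.
have YE : Y = (M @: Z) :|: [set E] by [].
split.
  split.
  - by apply/set0Pn; exists E; rewrite YE !inE eqxx orbT.
  - move=> A; rewrite YE !inE => /orP [/imsetP [B _ ->]|/eqP ->]; apply/eqP.
      by rewrite /M cblk cK c1 cM cK.
    by rewrite /E cblk c0 c1.
  - move=> A B; rewrite YE !inE => /orP [/imsetP [A' hA' ->]|/eqP ->]
      /orP [/imsetP [B' hB' ->]|/eqP ->] nAB.
    + by rewrite rMM //; apply: contraNneq nAB => ->.
    + by rewrite rME.
    + by rewrite -opprB mxrank_opp rME.
    + by rewrite eqxx in nAB.
rewrite YE setUC cardsU1 card_imset // hZ addnC.
have -> : (E \notin M @: Z) by apply/imsetP => [[A _ /eqP]]; rewrite eq_sym (negbTE (notE A)).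
by [].
Qed.
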